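(* A function $g\in\mathcal{G}$ is slow-dropping if and only if there exists a sub-polynomial function $h$ such that for all $y\in\mathbb{N}$ and all $x<y$ we have $g(x)\le g(y)h(y)$.
   Context: $\mathcal{G}=\{g:\mathbb{Z}_{\ge0}\to\mathbb{R}: g(0)=0,\ g(1)=1,\ g(x)>0\ \forall x>0\}$. A function $f:\mathbb{R}_{\ge0}\to\mathbb{R}_{\ge0}$ is sub-polynomial if for every $\alpha>0$, $\lim_{x\to\infty}x^\alpha f(x)=\infty$ and $\lim_{x\to\infty}x^{-\alpha}f(x)=0$. $g$ is slow-dropping if for every $\alpha>0$ there is $N>0$ such that for all $x<y$ with $y\ge N$, $g(y)\ge g(x)/y^\alpha$. *)

(* Defs.v *)
From Stdlib Require Import Reals.
Open Scope R_scope.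

Definition in_G (g : nat -> R) : Prop :=
  g 0%nat = 0 /\ g 1%nat = 1 /\ (forall x : nat, (0 < x)%nat -> 0 < g x).

(* f : R_{>=0} -> R_{>=0} (modelled as R -> R, nonnegative on [0,oo)) is
   sub-polynomial: for every alpha > 0,
   lim_{x->oo} x^alpha f(x) = +oo  and  lim_{x->oo} x^{-alpha} f(x) = 0. *)
Definition sub_polynomial (f : R -> R) : Prop :=
  (forall x, 0 <= x -> 0 <= f x) /\
  (forall alpha, 0 < alpha ->
     (forall M : R, exists N : R, forall x, N <= x -> 0 < x /\ M < Rpower x alpha * f x) /\
     (forall eps, 0 < eps -> exists N : R, forall x, N <= x ->
        0 < x /\ Rabs (Rpower x (- alpha) * f x) < eps)).

Definition slow_dropping (g : nat -> R) : Prop :=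
  forall alpha, 0 < alpha -> exists N : R, 0 < N /\
    forall x y : nat, (x < y)%nat -> N <= INR y ->
      g x / Rpower (INR y) alpha <= g y.

(* Main.v *)
Require Import Defs.
From Stdlib Require Import Reals.
From Stdlib Require Import Lra Lia ZArith.
Open Scope R_scope.

Definition fl (t : R) : nat := Z.to_nat (up t - 1).

Lemma fl_INR n : fl (INR n) = n.
Proof.
  unfold fl.
  assert (H : (Z.of_nat n + 1)%Z = up (INR n)).
  { apply tech_up; rewrite plus_IZR, <- INR_IZR_INZ; simpl; lra. }
  rewrite <- H. replace (Z.of_nat n + 1 - 1)%Z with (Z.of_nat n) by lia.
  apply Nat2Z.id.
Qed.

Lemma fl_bounds t : 0 <= t -> INR (fl t) <= t /\ t - 1 < INR (fl t).
Proof.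
  intros Ht. destruct (archimed t) as [H1 H2].
  assert (Hz : (0 < up t)%Z) by (apply lt_IZR; lra).
  unfold fl. rewrite INR_IZR_INZ, Z2Nat.id by lia.
  rewrite minus_IZR. simpl. lra.
Qed.

Lemma exp_le_mono a b : a <= b -> exp a <= exp b.
Proof. intros [H|H]; [left; apply exp_increasing; auto| subst; lra]. Qed.

Lemma ln_le_mono a b : 0 < a -> a <= b -> ln a <= ln b.
Proof. intros Ha [H|H]; [left; apply ln_increasing; auto| subst; lra]. Qed.

Fixpoint Mx (g : nat -> R) (k : nat) : R :=
  match k with O => 0 | S k' => Rmax (Mx g k') (g k') end.

Lemma Mx_ge g k x : (x < k)%nat -> g x <= Mx g k.
Proof.
  induction k; intros H; [lia|]. simpl.
  destruct (Nat.eq_dec x k) as [->|Hn].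
  - apply Rmax_r.
  - eapply Rle_trans; [apply IHk; lia|apply Rmax_l].
Qed.

Lemma Mx_le g k C : 0 <= C -> (forall x, (x < k)%nat -> g x <= C) -> Mx g k <= C.
Proof.
  induction k; intros HC H; simpl; [lra|].
  apply Rmax_lub; [apply IHk; auto|]; auto.
Qed.

Definition hh (g : nat -> R) (t : R) : R := Rmax 1 (Mx g (fl t) / g (fl t)).

Theorem proposition15 (g : nat -> R) (hg : in_G g) :
  slow_dropping g <->
  exists h : R -> R, sub_polynomial h /\
    forall y x : nat, (x < y)%nat -> g x <= g y * h (INR y).
Proof.
  destruct hg as [g0 [g1 gpos]].
  split.
  - intros Hsd. exists (hh g). split; [split|].
    + intros x _. unfold hh. pose proof (Rmax_l 1 (Mx g (fl x) / g (fl x))). lra.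
    + intros alpha Ha. split.
      * intros M. set (K := Rabs M / alpha).
        exists (Rmax 1 (exp K)). intros x Hx.
        pose proof (Rmax_l 1 (exp K)). pose proof (Rmax_r 1 (exp K)).
        assert (Hx0 : 0 < x) by lra. split; [auto|].
        assert (Hh : 1 <= hh g x) by apply Rmax_l.
        assert (HK : K <= ln x).
        { rewrite <- (ln_exp K). apply ln_le_mono; [apply exp_pos|lra]. }
        assert (HaK : alpha * K = Rabs M) by (unfold K; field; lra).
        assert (HP : M < Rpower x alpha).
        { unfold Rpower.
          destruct (Req_dec (alpha * ln x) 0) as [E|E].
          - assert (Rabs M <= 0) by nra. pose proof (Rabs_pos M).
            assert (Rabs M = 0) by lra. pose proof (Rle_abs M).
            rewrite E, exp_0. lra.
          - pose proof (exp_ineq1 _ E). pose proof (Rle_abs M). nra. }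
        assert (0 < Rpower x alpha) by (unfold Rpower; apply exp_pos).
        nra.
      * intros eps Heps.
        destruct (Hsd (alpha/2)) as [N0 [HN0 HN]]; [lra|].
        set (K := 2 * Rabs (ln eps) / alpha + 1).
        exists (Rmax (N0 + 2) (exp K)). intros t Ht.
        pose proof (Rmax_l (N0+2) (exp K)). pose proof (Rmax_r (N0+2) (exp K)).
        assert (Ht0 : 0 < t) by lra. split; [auto|].
        destruct (fl_bounds t) as [Fl1 Fl2]; [lra|].
        set (n := fl t) in *.
        assert (Hn1 : (0 < n)%nat) by (apply INR_lt; simpl; lra).
        assert (Hgn := gpos n Hn1).
        assert (HnN : N0 <= INR n) by lra.
        assert (HPn : 0 < Rpower (INR n) (alpha/2)) by (unfold Rpower; apply exp_pos).
        assert (HPt : Rpower (INR n) (alpha/2) <= Rpower t (alpha/2)).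
        { unfold Rpower. apply exp_le_mono. apply Rmult_le_compat_l; [lra|].
          apply ln_le_mono; lra. }
        assert (HMx : Mx g n <= g n * Rpower (INR n) (alpha/2)).
        { apply Mx_le; [nra|]. intros x Hx. specialize (HN x n Hx HnN).
          unfold Rdiv in HN.
          assert (Hinv : / Rpower (INR n) (alpha / 2) * Rpower (INR n) (alpha / 2) = 1)
            by (apply Rinv_l; lra).
          pose proof (Rinv_0_lt_compat _ HPn). nra. }
        assert (Hm : Mx g n / g n <= Rpower t (alpha/2)).
        { unfold Rdiv. apply Rle_trans with (Rpower (INR n) (alpha/2)); [|auto].
          assert (Hinv : / g n * g n = 1) by (apply Rinv_l; lra).
          pose proof (Rinv_0_lt_compat _ Hgn). nra. }
        assert (HKl : K <= ln t).
        { rewrite <- (ln_exp K). apply ln_le_mono; [apply exp_pos|lra]. }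
        assert (Ht1 : 1 <= Rpower t (alpha/2)).
        { unfold Rpower. rewrite <- exp_0. apply exp_le_mono.
          assert (0 <= K) by (unfold K; pose proof (Rabs_pos (ln eps));
            apply Rplus_le_le_0_compat; [apply Rmult_le_pos; [lra|left; apply Rinv_0_lt_compat; lra]|lra]).
          nra. }
        assert (Hhh : 1 <= hh g t <= Rpower t (alpha/2)).
        { unfold hh; split; [apply Rmax_l|apply Rmax_lub; auto]. }
        assert (HQ : 0 < Rpower t (- alpha)) by (unfold Rpower; apply exp_pos).
        rewrite Rabs_pos_eq by nra.
        apply Rle_lt_trans with (Rpower t (-alpha) * Rpower t (alpha/2)); [nra|].
        unfold Rpower. rewrite <- exp_plus.
        rewrite <- (exp_ln eps) by lra. apply exp_increasing.
        assert (HaK : alpha / 2 * K = Rabs (ln eps) + alpha/2) by (unfold K; field; lra).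
        pose proof (Rle_abs (- ln eps)). rewrite Rabs_Ropp in *. nra.
    + intros y x Hxy.
      assert (Hy : (0 < y)%nat) by lia. pose proof (gpos y Hy).
      unfold hh. rewrite fl_INR.
      apply Rle_trans with (g y * (Mx g y / g y)).
      * unfold Rdiv. rewrite <- Rmult_assoc, (Rmult_comm (g y)), Rmult_assoc, Rinv_r by lra.
        rewrite Rmult_1_r. apply Mx_ge; auto.
      * apply Rmult_le_compat_l; [lra|apply Rmax_r].
  - intros [h [[hnn Hsp] Hh]] alpha Ha.
    destruct (Hsp alpha Ha) as [_ Hup].
    destruct (Hup 1 ltac:(lra)) as [N HN].
    exists (Rmax 1 N). split; [pose proof (Rmax_l 1 N); lra|].
    intros x y Hxy Hy.
    pose proof (Rmax_l 1 N). pose proof (Rmax_r 1 N).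
    destruct (HN (INR y) ltac:(lra)) as [Hy0 Hlt].
    assert (Hy1 : (0 < y)%nat) by lia. pose proof (gpos y Hy1).
    pose proof (hnn (INR y) ltac:(lra)).
    set (P := Rpower (INR y) alpha).
    assert (HP : 0 < P) by (unfold P, Rpower; apply exp_pos).
    assert (HPi : Rpower (INR y) (- alpha) = / P).
    { unfold P, Rpower. rewrite Ropp_mult_distr_l_reverse. apply exp_Ropp. }
    rewrite HPi in Hlt.
    assert (Hinv : / P * P = 1) by (apply Rinv_l; lra).
    pose proof (Rinv_0_lt_compat _ HP).
    rewrite Rabs_pos_eq in Hlt by nra.
    assert (Hhl : h (INR y) < P) by nra.
    specialize (Hh y x Hxy).
    unfold Rdiv. nra.
Qed.
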